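(* Let $\alpha=(\alpha_\pi)_{\pi\in\mathcal P}$ and $\beta=(\beta_\pi)_{\pi\in\mathcal P}$ be admissible families of weights. Then $\alpha=\beta$ if and only if $\alpha_\sigma=\beta_\sigma$ for every partition $\sigma\in\mathcal P(\mathbf f)$ with exactly two blocks and $\mathbf f\in\mathcal F^n$, $n\le 4$.
   Context: Fix a finite set $\mathcal F$ of faces. For a word $\mathbf f\in\mathcal F^n$ ($n\ge1$), $[n]_{\mathbf f}$ is $\{1,\dots,n\}$ with faces $\ell\mapsto\mathbf f(\ell)$ (elements are called legs); $\mathcal P(\mathbf f)$ is the set of set partitions of $[n]$, viewed with these faces, and $\mathcal P=\bigcup_{\mathbf f}\mathcal P(\mathbf f)$. A finite totally ordered set $S$ with a face map is identified with $[m]_{|S|}$ through the order-preserving bijection ($|S|$ = word of faces read in order), so partitions of such sets are elements of $\mathcal P$. $1_{\mathbf f}$ is the one-block partition. For blocks $\beta_1\ne\beta_2$ of $\pi$, $\pi_{\beta_1\smile\beta_2}=(\pi\setminus\{\beta_1,\beta_2\})\cup\{\beta_1\cup\beta_2\}$, and $\{\beta_1,\beta_2\}$ is regarded as a partition of the multi-faced set $\beta_1\cup\beta_2$. Reduction: for $\pi\in\mathcal P(\mathbf f)$ let $s\sim t$ ($s\le t$) iff all $r\in[s,t]$ have the same face and lie in the same block; $\pi_{\mathrm{red}}$ is the induced partition of the quotient $[n]/\sim$ (classes are intervals, ordered naturally, with their common face). Mirror: $\overline{\mathbf f}(i)=\mathbf f(n+1-i)$, $\overline\pi=\{\{n+1-i:i\in\beta\}:\beta\in\pi\}\in\mathcal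 P(\overline{\mathbf f})$. A family $\alpha=(\alpha_\pi)_{\pi\in\mathcal P}$ of complex numbers is admissible if: (i) $\alpha_{1_{\mathbf f}}=1$ for all $\mathbf f$; (ii) $\alpha_{\{\{1\},\{2\}\}}=1$ for every $\mathbf f\in\mathcal F^2$; (iii) $\alpha_\pi=\alpha_{\pi_{\mathrm{red}}}$; (iv) if $\pi\in\mathcal P(\mathbf f)$ has blocks $\beta_1\ne\beta_2$ with $i\in\beta_1$, $i+1\in\beta_2$, $\mathbf f(i)=\mathbf f(i+1)$, then $\alpha_\pi=\alpha_{\pi_{\beta_1\smile\beta_2}}\alpha_{\{\beta_1,\beta_2\}}$; (v) $\alpha_\pi=\alpha_\sigma$ whenever $\pi\in\mathcal P(\mathbf f)$, $\sigma\in\mathcal P(\mathbf g)$ have the same underlying set partition of $[n]$ and $\mathbf f(\ell)=\mathbf g(\ell)$ for $1<\ell<n$; (vi) $\alpha_{\overline\pi}=\overline{\alpha_\pi}$. *)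

(* Defs.v *)
From mathcomp Require Import all_boot all_order all_algebra.
Set Implicit Arguments. Unset Strict Implicit. Unset Printing Implicit Defensive.
Import Order.TTheory GRing.Theory Num.Theory.

(* Legs of [n] are 'I_n (0-indexed: leg l corresponds to paper's l+1).
   A set partition of [n] is a pi : {set {set 'I_n}} with
   partition pi [set: 'I_n] (mathcomp: blocks nonempty, disjoint, covering). *)

(* A family of weights: for every n, word f and set partition pi of [n]_f,
   a number alpha n f pi.  Values on non-partitions are irrelevant. *)
Definition weight_family (F : finType) (C : Type) :=
  forall n : nat, {ffun 'I_n -> F} -> {set {set 'I_n}} -> C.

Section Defs.
Variables (F : finType).

(* A subset S of [n], ordered naturally, identified with [#|S|] through the
   order-preserving bijection enum_val (enum S lists S increasingly). *)
Definition sub_word n (f : {ffun 'I_n -> F}) (S : {set 'I_n})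
  : {ffun 'I_#|S| -> F} := [ffun j => f (enum_val j)].

Definition sub_part n (S : {set 'I_n}) (P : {set {set 'I_n}})
  : {set {set 'I_#|S|}} :=
  [set [set j : 'I_#|S| | enum_val j \in B] | B : {set 'I_n} in [set B in P | B :&: S != set0]].

Definition one_part n : {set {set 'I_n}} := [set [set: 'I_n]].

Definition merge n (pi : {set {set 'I_n}}) (b1 b2 : {set 'I_n}) :=
  ((pi :\ b1) :\ b2) :|: [set b1 :|: b2].

Definition linked n (f : {ffun 'I_n -> F}) (pi : {set {set 'I_n}}) (i j : 'I_n) :=
  (f i == f j) && (pblock pi i == pblock pi j).

(* Leftmost representatives of the ~-classes (classes are the maximal
   intervals of consecutive legs with equal face lying in one block). *)
Definition red_reps n (f : {ffun 'I_n -> F}) (pi : {set {set 'I_n}}) : {set 'I_n} :=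
  [set s : 'I_n | [forall t : 'I_n, (t.+1 == s :> nat) ==> ~~ linked f pi t s]].

(* pi_red as a partition of the quotient [n]/~ (identified with the ordered
   set of class representatives) together with its word *)
Definition red_word n (f : {ffun 'I_n -> F}) (pi : {set {set 'I_n}}) :=
  sub_word f (red_reps f pi).
Definition red_part n (f : {ffun 'I_n -> F}) (pi : {set {set 'I_n}}) :=
  sub_part (red_reps f pi) pi.

Definition mirror_word n (f : {ffun 'I_n -> F}) : {ffun 'I_n -> F} :=
  [ffun i => f (rev_ord i)].
Definition mirror_part n (pi : {set {set 'I_n}}) : {set {set 'I_n}} :=
  [set (@rev_ord n) @: B | B : {set 'I_n} in pi].

Definition admissible (C : numClosedFieldType) (alpha : weight_family F C) : Prop :=
  (* (i) *)
  (forall n (f : {ffun 'I_n -> F}), 0 < n -> alpha n f (one_part n) = 1%R) /\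
  (* (ii) *)
  (forall f : {ffun 'I_2 -> F}, alpha 2 f [set [set i] | i : 'I_2] = 1%R) /\
  (* (iii) *)
  (forall n (f : {ffun 'I_n -> F}) (pi : {set {set 'I_n}}),
      0 < n -> partition pi [set: 'I_n] ->
      alpha n f pi = alpha _ (red_word f pi) (red_part f pi)) /\
  (* (iv) *)
  (forall n (f : {ffun 'I_n -> F}) (pi : {set {set 'I_n}}) (b1 b2 : {set 'I_n})
          (i j : 'I_n),
      0 < n -> partition pi [set: 'I_n] ->
      b1 \in pi -> b2 \in pi -> b1 != b2 ->
      i \in b1 -> j \in b2 -> j = i.+1 :> nat -> f i = f j ->
      alpha n f pi =
        (alpha n f (merge pi b1 b2) *
         alpha _ (sub_word f (b1 :|: b2)) (sub_part (b1 :|: b2) [set b1; b2]))%R) /\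
  (* (v) *)
  (forall n (f g : {ffun 'I_n -> F}) (pi : {set {set 'I_n}}),
      0 < n -> partition pi [set: 'I_n] ->
      (forall l : 'I_n, 0 < l < n.-1 -> f l = g l) ->
      alpha n f pi = alpha n g pi) /\
  (* (vi) *)
  (forall n (f : {ffun 'I_n -> F}) (pi : {set {set 'I_n}}),
      0 < n -> partition pi [set: 'I_n] ->
      alpha n (mirror_word f) (mirror_part pi) = (alpha n f pi)^*%R).

(* equality of families as families indexed by P = U_f P(f), n >= 1 *)
Definition fam_eq (C : Type) (alpha beta : weight_family F C) : Prop :=
  forall n (f : {ffun 'I_n -> F}) (pi : {set {set 'I_n}}),
    0 < n -> partition pi [set: 'I_n] -> alpha n f pi = beta n f pi.

End Defs.

(* Main.v *)
Require Import Defs.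
From mathcomp Require Import all_boot all_order all_algebra.
From mathcomp Require Import zify.
From Stdlib Require Import Lia.
Import GRing.Theory.
Unset Printing Implicit Defensive.

Section L.
Variables (F : finType) (x0 : F).
Local Notation T := (F * nat)%type.
Definition d0 : T := (x0, 0).

Definition lab (s : seq T) (i : nat) := (nth d0 s i).2.
Definition fac (s : seq T) (i : nat) := (nth d0 s i).1.
Definition word (s : seq T) : {ffun 'I_(size s) -> F} := [ffun i : 'I_(size s) => fac s i].
Definition labrel (s : seq T) : rel 'I_(size s) := fun i j => lab s i == lab s j.
Definition part (s : seq T) := equivalence_partition (labrel s) [set: 'I_(size s)].

Lemma eq_eqpart (T' : finType) (R R' : rel T') D :
  (forall x y, R x y = R' x y) -> equivalence_partition R D = equivalence_partition R' D.
Proof.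
move=> E; rewrite /equivalence_partition; apply: eq_imset => x.
by apply/setP => y; rewrite !inE E.
Qed.
Arguments eq_eqpart {T' R R' D}.

Lemma labrel_equiv s : {in [set: 'I_(size s)] & &, equivalence_rel (labrel s)}.
Proof. by move=> x y z _ _ _; rewrite /labrel eqxx; split=> // /eqP ->. Qed.

Lemma part_partition s : partition (part s) [set: 'I_(size s)].
Proof. exact: equivalence_partitionP (labrel_equiv s). Qed.

Lemma pblock_part s (i j : 'I_(size s)) :
  (pblock (part s) i == pblock (part s) j) = (lab s i == lab s j).
Proof.
have P := part_partition s; have [/eqP cov ti _] := and3P P.
rewrite eq_pblock // ?cov ?inE //.
by rewrite (pblock_equivalence_partition (labrel_equiv s)) ?inE.
Qed.

Lemma mem_pblock_part s (i j : 'I_(size s)) :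
  (j \in pblock (part s) i) = (lab s i == lab s j).
Proof.
by rewrite (pblock_equivalence_partition (labrel_equiv s)) ?inE.
Qed.

Variable C : numClosedFieldType.
Section G.
Variable alpha : weight_family F C.
Definition A (s : seq T) := alpha (size s) (word s) (part s).

Lemma alpha_rep m (g : {ffun 'I_m -> F}) (R : rel 'I_m) s :
  size s = m -> (forall j : 'I_m, g j = fac s j) ->
  (forall j j' : 'I_m, R j j' = (lab s j == lab s j')) ->
  alpha m g (equivalence_partition R setT) = A s.
Proof.
move=> e; subst m => Hg HR; rewrite /A.
have -> : g = word s by apply/ffunP => j; rewrite ffunE Hg.
by rewrite /part (eq_eqpart HR).
Qed.

Hypothesis Hadm : admissible alpha.

Lemma G1 s : 0 < size s -> (forall i j, i < size s -> j < size s -> lab s i = lab s j) -> A s = 1%R.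
Proof.
move=> s0 Hl; have [H1 _] := Hadm.
rewrite /A -(H1 _ (word s) s0); congr (alpha _ _ _).
rewrite /part /equivalence_partition /one_part.
apply/setP => B; rewrite inE; apply/imsetP/eqP.
  case=> x _ ->; apply/setP => y; rewrite !inE /labrel (Hl x y) ?eqxx //.
move=> ->; exists (Ordinal s0) => //; apply/setP => y; rewrite !inE /labrel (Hl 0 y) ?eqxx //.
Qed.

Lemma G2 s : size s = 2 -> lab s 0 != lab s 1 -> A s = 1%R.
Proof.
move=> s2 Hl; have [_ [H2 _]] := Hadm.
rewrite -(H2 [ffun i : 'I_2 => fac s i]).
have -> : [set [set i] | i : 'I_2] = equivalence_partition (fun i j => i == j) setT.
  rewrite /equivalence_partition; apply/setP => B.
  have E x : [set y in [set: 'I_2] | x == y] = [set x].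
    by apply/setP => y; rewrite !inE eq_sym.
  by apply/imsetP/imsetP => -[x _ ->]; exists x; rewrite ?E ?inE.
symmetry; apply: alpha_rep => //; first by move=> j; rewrite ffunE.
move=> [[|[|j]] Hj] [[|[|j']] Hj'] //=; rewrite ?eqxx //;
  by apply/eqP/eqP => [/(congr1 val)//|E]; rewrite E eqxx in Hl.
Qed.

Lemma G5 x t a : A ((a, x.2) :: t) = A (x :: t).
Proof.
have [_ [_ [_ [_ [H5 _]]]]] := Hadm.
rewrite /A (H5 _ _ (word (x :: t))) //.
- congr (alpha _ _ _); rewrite /part; apply: eq_eqpart => i j.
  by rewrite /labrel /lab; case: i => [[|i] ?]; case: j => [[|j] ?].
- exact: (part_partition ((a, x.2) :: t)).
- by move=> [[|l] Hl] //= _; rewrite !ffunE.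
Qed.

Lemma G5' t x a : A (rcons t (a, x.2)) = A (rcons t x).
Proof.
have [_ [_ [_ [_ [H5 _]]]]] := Hadm.
have e : size (rcons t (a, x.2)) = size (rcons t x) by rewrite !size_rcons.
have <- : alpha (size (rcons t x)) [ffun i : 'I_(size (rcons t x)) => fac (rcons t (a, x.2)) i] (part (rcons t x)) = A (rcons t (a, x.2)).
  apply: alpha_rep => //; first by move=> j; rewrite ffunE.
  move=> j j'; rewrite /labrel /lab !nth_rcons.
  by case: ltngtP => _; case: ltngtP.
rewrite /A (H5 _ _ (word (rcons t x))) //.
- rewrite size_rcons; exact: ltn0Sn.
- exact: part_partition.
- move=> [l Hl] /= /andP[_] Hlt; rewrite size_rcons /= in Hlt; rewrite !ffunE /fac !nth_rcons Hlt //.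
Qed.


Definition subl (s : seq T) (q : pred nat) := [seq nth d0 s i | i <- iota 0 (size s) & q i].

Lemma enum_sub n (q : pred nat) :
  map val (enum [set i : 'I_n | q i]) = filter q (iota 0 n).
Proof.
rewrite -val_enum_ord filter_map; congr map.
rewrite enumT /enum_mem; apply: eq_filter => i; by rewrite !inE.
Qed.

Lemma card_sub s (q : pred nat) : #|[set i : 'I_(size s) | q i]| = size (subl s q).
Proof. by rewrite cardE -(size_map val) enum_sub size_map. Qed.

Lemma nth_subl s (q : pred nat) (j : 'I_#|[set i : 'I_(size s) | q i]|) :
  nth d0 (subl s q) j = nth d0 s (enum_val j).
Proof.
have jl : j < size (filter q (iota 0 (size s))).
  by rewrite -enum_sub size_map -cardE.
rewrite /subl (nth_map 0) // -enum_sub (nth_map (enum_val j)) -?enum_val_nth //.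
by rewrite -cardE.
Qed.

Lemma alpha_sublist s (q : pred nat) :
  alpha #|[set i : 'I_(size s) | q i]| (sub_word (word s) [set i : 'I_(size s) | q i])
    (equivalence_partition (fun j j' : 'I_#|[set i : 'I_(size s) | q i]| =>
       lab s (enum_val j) == lab s (enum_val j')) setT) = A (subl s q).
Proof.
apply: alpha_rep; first by rewrite card_sub.
  by move=> j; rewrite ffunE /fac nth_subl ffunE.
by move=> j j'; rewrite /lab !nth_subl.
Qed.

Lemma subl_filter s (P : pred T) : subl s (fun k => P (nth d0 s k)) = filter P s.
Proof.
rewrite /subl -filter_map; congr filter.
by rewrite -{3}(mkseq_nth d0 s).
Qed.

Lemma sub_part_eq n (P : {set {set 'I_n}}) D (S : {set 'I_n}) :
  partition P D -> S \subset D ->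
  sub_part S P = equivalence_partition
     (fun j j' : 'I_#|S| => enum_val j' \in pblock P (enum_val j)) setT.
Proof.
move=> partP sSD; have [/eqP cov ti _] := and3P partP.
apply/setP => X; apply/imsetP/imsetP.
  case=> B; rewrite inE => /andP[PB /set0Pn[x /setIP[Bx Sx]]] ->.
  exists (enum_rank_in Sx x); first by [].
  apply/setP => j; rewrite !inE enum_rankK_in // (def_pblock ti PB Bx).
  done.
case=> j _ ->.
have Dj : enum_val j \in cover P by rewrite cov (subsetP sSD) // enum_valP.
exists (pblock P (enum_val j)).
  rewrite inE pblock_mem //=; apply/set0Pn; exists (enum_val j).
  by rewrite inE mem_pblock Dj enum_valP.
by apply/setP => j'; rewrite !inE.
Qed.

Definition keep (s : seq T) (i : nat) := (i == 0) || (nth d0 s i.-1 != nth d0 s i).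

Fixpoint rdr_aux (p : T) (t : seq T) : seq T :=
  match t with
  | [::] => [::]
  | y :: t' => if y == p then rdr_aux p t' else y :: rdr_aux y t'
  end.
Definition rdr (s : seq T) := if s is x :: t then x :: rdr_aux x t else [::].

Lemma shift_iota (U : Type) (f : nat -> U) (P : pred nat) n m :
  [seq f i | i <- iota m.+1 n & P i] = [seq f i.+1 | i <- iota m n & P i.+1].
Proof. by elim: n m => //= n IH m; case: (P m.+1) => /=; rewrite IH. Qed.

Lemma rdr_aux_eq p t :
  rdr_aux p t = [seq nth d0 t i | i <- iota 0 (size t) & nth d0 (p :: t) i != nth d0 t i].
Proof.
elim: t p => [|y t IH] p //=.
have E q : [seq nth d0 (y :: t) i | i <- [seq i <- iota 1 (size t)
           | nth d0 [:: q, y & t] i != nth d0 (y :: t) i]] = rdr_aux y t.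
  by rewrite IH shift_iota.
by rewrite eq_sym; case: eqP => [->|_] /=; rewrite E.
Qed.

Lemma subl_keep s : subl s (keep s) = rdr s.
Proof.
case: s => [|x t] //=; rewrite /subl /= rdr_aux_eq.
by rewrite shift_iota.
Qed.

Lemma rdr_aux_dup p a z b : rdr_aux p (a ++ z :: z :: b) = rdr_aux p (a ++ z :: b).
Proof.
elim: a p => [|y a IH] p /=; last by rewrite !IH.
by rewrite eqxx; case: eqP => // ->.
Qed.

Lemma rdr_dup a z b : rdr (a ++ z :: z :: b) = rdr (a ++ z :: b).
Proof.
case: a => [|x a] /=; first by rewrite eqxx.
by rewrite rdr_aux_dup.
Qed.


Lemma reps_eq s : red_reps (word s) (part s) = [set i : 'I_(size s) | keep s i].
Proof.
apply/setP => u; rewrite !inE /keep.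
have linkE (t : 'I_(size s)) : linked (word s) (part s) t u = (nth d0 s t == nth d0 s u).
  rewrite /linked pblock_part !ffunE /fac /lab.
  by case: (nth d0 s t) => a b; case: (nth d0 s u) => c d; rewrite xpair_eqE.
case: u linkE => [[|v] Hv] linkE /=.
  by apply/forallP.
apply/idP/idP => [/forallP H|H]; last apply/forallP => t.
  have Hv' : v < size s by apply: ltnW.
  by have := H (Ordinal Hv'); rewrite eqxx implyTb linkE.
apply/implyP => /eqP [Et]; rewrite linkE /=.
by rewrite Et.
Qed.

Lemma G3 s : 0 < size s -> A s = A (rdr s).
Proof.
move=> s0; have [_ [_ [H3 _]]] := Hadm.
rewrite -subl_keep {1}/A (H3 (size s) (word s) (part s) s0 (part_partition _)).
rewrite /red_word /red_part reps_eq.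
rewrite (sub_part_eq _ _ _ _ (part_partition s) (subsetT _)).
rewrite -alpha_sublist; congr (alpha _ _ _).
by apply: eq_eqpart => j j'; rewrite mem_pblock_part.
Qed.

Lemma Gdup a z b : A (a ++ z :: z :: b) = A (a ++ z :: b).
Proof.
rewrite G3 ?size_cat ?addnS // [RHS]G3 ?size_cat ?addnS //.
by rewrite rdr_dup.
Qed.


Definition relab (l2 l1 : nat) (s : seq T) :=
  [seq (w.1, if w.2 == l2 then l1 else w.2) | w <- s].

Lemma merge_part s (b1 b2 : {set 'I_(size s)}) l1 l2 (k0 : 'I_(size s)) :
  l1 != l2 -> (forall k, (k \in b1) = (lab s k == l1)) ->
  (forall k, (k \in b2) = (lab s k == l2)) -> lab s k0 = l1 ->
  Defs.merge (part s) b1 b2 = equivalence_partition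
    (fun j j' : 'I_(size s) => (if lab s j == l2 then l1 else lab s j) ==
                             (if lab s j' == l2 then l1 else lab s j')) setT.
Proof.
move=> l12 m1 m2 k0l.
set lab' := fun k : 'I_(size s) => if lab s k == l2 then l1 else lab s k.
have HA (x : 'I_(size s)) : lab s x != l1 -> lab s x != l2 ->
    [set y in [set: 'I_(size s)] | lab' x == lab' y] = [set y in setT | labrel s x y].
  move=> n1 n2; apply/setP => y; rewrite !inE /lab' /labrel (negbTE n2).
  case: (ifP (lab s y == l2)) => [/eqP ->|//].
  by rewrite (negbTE n2) (negbTE n1).
have HB (x : 'I_(size s)) : (lab s x == l1) || (lab s x == l2) ->
    [set y in [set: 'I_(size s)] | lab' x == lab' y] = b1 :|: b2.
  move=> Hx; apply/setP => y; rewrite !inE m1 m2 /lab'.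
  have -> : (if lab s x == l2 then l1 else lab s x) = l1.
    by case/orP: Hx => /eqP ->; rewrite ?eqxx // (negbTE l12).
  by case: (lab s y =P l2) => [->|ne] /=; rewrite ?eqxx ?orbT // orbF eq_sym.
apply/setP => B; rewrite /Defs.merge !inE.
apply/idP/imsetP.
  case/orP => [/andP[nb2 /andP[nb1 /imsetP[x _ Bx]]]|/eqP ->].
    have n1 : lab s x != l1.
      apply: contraNneq nb1 => e; rewrite Bx; apply/eqP/setP => y.
      by rewrite !inE m1 /labrel e eq_sym.
    have n2 : lab s x != l2.
      apply: contraNneq nb2 => e; rewrite Bx; apply/eqP/setP => y.
      by rewrite !inE m2 /labrel e eq_sym.
    by exists x => //; rewrite Bx HA.
  by exists k0 => //; rewrite HB // k0l eqxx.
case=> x _ ->.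
case: (boolP ((lab s x == l1) || (lab s x == l2))) => Hx.
  by rewrite HB // eqxx orbT.
move: Hx; rewrite negb_or => /andP[n1 n2]; rewrite HA //.
apply/orP; left; apply/and3P; split.
- apply/eqP => /setP /(_ x); rewrite !inE m2 /labrel eqxx.
  by rewrite (negbTE n2).
- apply/eqP => /setP /(_ x); rewrite !inE m1 /labrel eqxx.
  by rewrite (negbTE n1).
- exact: imset_f.
Qed.

Lemma G4 p u v q : u.1 = v.1 -> u.2 != v.2 ->
  A (p ++ u :: v :: q) = (A (relab v.2 u.2 (p ++ u :: v :: q)) *
      A (filter (fun w => w.2 \in [:: u.2; v.2]) (p ++ u :: v :: q)))%R.
Proof.
move=> e12 n12; set s := p ++ u :: v :: q.
have Hi : size p < size s by rewrite /s size_cat /= addnS ltnS leq_addr.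
have Hj : (size p).+1 < size s by rewrite /s size_cat /= !addnS !ltnS leq_addr.
set oi := Ordinal Hi; set oj := Ordinal Hj.
have nthi : nth d0 s (size p) = u by rewrite /s nth_cat ltnn subnn.
have nthj : nth d0 s (size p).+1 = v by rewrite /s nth_cat ltnNge leqnSn /= subSnn.
set b1 := pblock (part s) oi; set b2 := pblock (part s) oj.
have m1 k : (k \in b1) = (lab s k == u.2) by rewrite mem_pblock_part /lab /= nthi eq_sym.
have m2 k : (k \in b2) = (lab s k == v.2) by rewrite mem_pblock_part /lab /= nthj eq_sym.
have [/eqP cov ti _] := and3P (part_partition s).
have [_ [_ [_ [H4 _]]]] := Hadm.
rewrite {1}/A (H4 _ _ _ b1 b2 oi oj _ (part_partition s)) //; first last.
- by rewrite !ffunE /fac /= nthi nthj e12.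
- by rewrite m2 /lab nthj.
- by rewrite m1 /lab nthi.
- by rewrite pblock_part /lab /= nthi nthj.
- by rewrite pblock_mem // cov inE.
- by rewrite pblock_mem // cov inE.
- by rewrite (leq_ltn_trans _ Hi).
congr (_ * _)%R.
  rewrite (merge_part s b1 b2 u.2 v.2 oi n12 m1 m2); last by rewrite /lab nthi.
  apply: alpha_rep; first by rewrite size_map.
    by move=> j; rewrite ffunE /fac (nth_map d0).
  by move=> j j'; rewrite /lab !(nth_map d0).
have Hpart : partition [set b1; b2] (b1 :|: b2).
  apply/and3P; split.
  - apply/eqP/setP => x; apply/bigcupP/setUP => [[B /set2P[->|->] xB]|[xB|xB]].
    + by left.
    + by right.
    + by exists b1; rewrite ?set21.
    + by exists b2; rewrite ?set22.
  - apply/trivIsetP => B1 B2 /set2P[->|->] /set2P[->|->]; rewrite ?eqxx // => _.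
    + rewrite -setI_eq0; apply/eqP/setP => k; rewrite !inE m1 m2.
      by apply/negP => /andP[/eqP E /eqP E']; move: n12; rewrite -E -E' eqxx.
    + rewrite -setI_eq0; apply/eqP/setP => k; rewrite !inE m1 m2.
      by apply/negP => /andP[/eqP E /eqP E']; move: n12; rewrite -E -E' eqxx.
  - apply/set2P => -[] /setP; [move/(_ oi) | move/(_ oj)];
    by rewrite !inE ?m1 ?m2 /lab ?nthi ?nthj eqxx.
rewrite (sub_part_eq _ _ _ _ Hpart (subxx _)).
rewrite (eq_eqpart (R' := fun j j' : 'I_#|b1 :|: b2| =>
            lab s (enum_val j) == lab s (enum_val j'))); last first.
  move=> j j'.
  have := enum_valP j; have := enum_valP j'.
  move: (enum_val j) (enum_val j') => x y; rewrite !inE !m1 !m2 => Hy Hx.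
  have tiP : trivIset [set b1; b2] by case/and3P: Hpart.
  case/orP: Hx => Hx.
    have xb : x \in b1 by rewrite m1.
    by rewrite (def_pblock tiP (set21 b1 b2) xb) m1 (eqP Hx) eq_sym.
  have xb : x \in b2 by rewrite m2.
  by rewrite (def_pblock tiP (set22 b1 b2) xb) m2 (eqP Hx) eq_sym.
have E : b1 :|: b2 = [set k : 'I_(size s) | lab s k \in [:: u.2; v.2]].
  by apply/setP => k; rewrite !inE m1 m2.
rewrite E (alpha_sublist s (fun k => lab s k \in [:: u.2; v.2])).
by rewrite -subl_filter.
Qed.


Lemma Gcoll x y r : x.2 = y.2 -> A (x :: y :: r) = A (y :: r).
Proof.
move=> e; rewrite -(G5 x _ y.1) e.
have -> : (y.1, y.2) = y by case: y {e}.
exact: (Gdup [::] y r).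
Qed.

Lemma Gcoll' r x y : x.2 = y.2 -> A (rcons (rcons r x) y) = A (rcons r y).
Proof.
move=> e; rewrite -(G5' _ y x.1) -e.
have -> : (x.1, x.2) = x by case: x {e}.
rewrite -!cats1 -catA /= Gdup !cats1 -(G5' _ x y.1) e.
by have -> : (y.1, y.2) = y by case: y {e}.
Qed.

Lemma Gpre u w r : all (fun w' => w'.2 == w.2) u -> A (u ++ w :: r) = A (w :: r).
Proof.
elim: u => [|a u IH] //= /andP[/eqP ea Hu].
rewrite -IH //; case: u {IH} Hu => [|b u] /=; first by rewrite Gcoll.
by case/andP => /eqP eb _; rewrite Gcoll // ea eb.
Qed.

Lemma Gtriv u v Q Q' : Q != Q' -> u != [::] -> v != [::] ->
  all (fun w => w.2 == Q) u -> all (fun w => w.2 == Q') v -> A (u ++ v) = 1%R.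
Proof.
move=> nQ; case/lastP: u => [|u w] // _; case/lastP: v => [|v w'] // _.
rewrite all_rcons => /andP[/eqP ew Hu] Hv.
rewrite cat_rcons (Gpre u w); last first.
  by apply/allP => a /(allP Hu) /eqP ->; rewrite ew.
move: Hv; rewrite all_rcons => /andP[/eqP ew' Hv].
elim/last_ind: v Hv => [|v a IH] /=.
  move=> _; apply: G2 => //; rewrite /lab /= ew ew' //.
rewrite all_rcons => /andP[/eqP ea Hv].
by rewrite -!rcons_cons Gcoll' ?ea ?ew' // rcons_cons IH.
Qed.

End G.

Lemma relab_id l2 l1 (s : seq T) : all (fun w => w.2 != l2) s -> relab l2 l1 s = s.
Proof.
elim: s => [|w s IH] //= /andP[nw Hs]; rewrite IH // (negbTE nw).
by case: w {nw}.
Qed.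

Lemma relab_inv Q Q' (b : seq T) : all (fun w => w.2 != Q') b ->
  relab Q' Q (relab Q Q' b) = b.
Proof.
elim: b => [|w b IH] //= /andP[nw Hb]; rewrite IH //.
case: w nw => w1 w2 /= nw; case: (w2 =P Q) => [->|_]; first by rewrite eqxx.
by rewrite (negbTE nw).
Qed.

Lemma split2 (P : pred T) (t : seq T) : 1 < count P t ->
  exists a z b, t = a ++ z :: b /\ P z /\ has P b.
Proof.
elim: t => [|w t IH] //=; case: (boolP (P w)) => Pw /= H.
  exists [::], w, t; split => //; split => //; rewrite has_count.
  by move: H; case: (count P t).
have /IH [a [z [b [-> [Pz Hb]]]]] : 1 < count P t by move: H; rewrite add0n.
by exists (w :: a), z, b.
Qed.

Lemma third (l : seq nat) a b : 2 < size (undup l) ->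
  exists2 z, z \in l & z \notin [:: a; b].
Proof.
move=> H; case: (boolP (has (fun z => z \notin [:: a; b]) l)) => [/hasP[z zl zn]|/hasPn Hn].
  by exists z.
have : size (undup l) <= size [:: a; b].
  apply: uniq_leq_size; first exact: undup_uniq.
  by move=> z; rewrite mem_undup => /Hn; rewrite negbK.
by rewrite /= leqNgt H.
Qed.

Lemma nlab_relab (s : seq T) l1 l2 : l1 \in map snd s -> l2 \in map snd s -> l1 != l2 ->
  size (undup (map snd (relab l2 l1 s))) < size (undup (map snd s)).
Proof.
move=> h1 h2 n12.
have U : uniq (undup (map snd s)) := undup_uniq _.
have : size (undup (map snd (relab l2 l1 s))) <= size (rem l2 (undup (map snd s))).
  apply: uniq_leq_size; first exact: undup_uniq.
  move=> z; rewrite mem_undup (mem_rem_uniq _ U) => /mapP[w /mapP[w0 w0s ->] ->] /=.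
  rewrite !inE mem_undup; case: ifP => [_|/negbT ne]; first by rewrite n12 h1.
  by rewrite ne; apply/mapP; exists w0.
rewrite size_rem ?mem_undup //.
have h0 : 0 < size (undup (map snd s)).
  by rewrite lt0n size_eq0; apply/eqP => E; move: h1; rewrite -mem_undup E.
lia.
Qed.

Section Main.
Variables alpha beta : weight_family F C.
Hypothesis Ha : admissible alpha.
Hypothesis Hb : admissible beta.
Hypothesis Hsmall : forall s, 0 < size s <= 4 -> size (undup (map snd s)) = 2 ->
  A alpha s = A beta s.

Lemma Cstep n (IHn : forall s, 0 < size s < n -> A alpha s = A beta s) d
  (IHd : forall d', d' < d -> forall s, size (undup (map snd s)) = d' -> size s = n ->
          A alpha s = A beta s) p u v q :
  size (p ++ u :: v :: q) = n -> size (undup (map snd (p ++ u :: v :: q))) = d -> 2 < d ->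
  u.1 = v.1 -> A alpha (p ++ u :: v :: q) = A beta (p ++ u :: v :: q).
Proof.
move=> Hn Hd d3 e1.
case: (eqVneq u.2 v.2) => e2.
  have uv : u = v by move: (u) (v) e1 e2 => [? ?] [? ?] /= -> ->.
  rewrite uv (Gdup alpha Ha) (Gdup beta Hb); apply: IHn.
  by move: Hn; rewrite !size_cat /= => <-; apply/andP; split; lia.
rewrite (G4 alpha Ha p u v q e1 e2) (G4 beta Hb p u v q e1 e2); congr (_ * _)%R.
  apply: (IHd _ _ _ erefl); last by rewrite size_map.
  rewrite -Hd; apply: nlab_relab => //; apply/mapP.
  - by exists u => //; rewrite mem_cat inE eqxx orbT.
  - by exists v => //; rewrite mem_cat !inE eqxx !orbT.
apply: IHn; apply/andP; split.
  rewrite size_filter -has_count; apply/hasP; exists u; first by rewrite mem_cat inE eqxx orbT.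
  by rewrite inE eqxx.
have [z /mapP[w ws ->] zn] := third _ u.2 v.2 (leq_trans d3 (eq_leq (esym Hd))).
set P := (fun w : T => w.2 \in [:: u.2; v.2]).
have Hc : 0 < count (predC P) (p ++ [:: u, v & q]).
  by rewrite -has_count; apply/hasP; exists w.
rewrite -Hn size_filter -(count_predC P); lia.
Qed.


Lemma lab3 (L M l1 l2 z : nat) : L != M -> L \in [:: l1; l2] -> M \in [:: l1; l2] ->
  z \in [:: l1; l2] -> z \in [:: L; M].
Proof.
rewrite !inE => nLM /orP[]/eqP E1 /orP[]/eqP E2 /orP[]/eqP E3;
  subst; rewrite ?eqxx ?orbT //; by rewrite eqxx in nLM.
Qed.

Lemma Fstep n (IHn : forall s, 0 < size s < n -> A alpha s = A beta s) x y t :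
  size (x :: y :: t) = n -> 4 < n -> x.2 != y.2 ->
  all (fun w => w.2 \in [:: x.2; y.2]) t ->
  A alpha (x :: y :: t) = A beta (x :: y :: t).
Proof.
move=> Hn n4 nLM Hall.
have Hcnt : count (fun w : T => w.2 == x.2) t + count (fun w : T => w.2 == y.2) t = size t.
  rewrite -(count_predC (fun w : T => w.2 == x.2)); congr (_ + _).
  apply: eq_in_count => w /(allP Hall); rewrite !inE /=.
  by case/orP => /eqP ->; rewrite ?eqxx ?(negbTE nLM) // eq_sym nLM.
have [Q [QLM cQ]] : exists Q, Q \in [:: x.2; y.2] /\ 1 < count (fun w : T => w.2 == Q) t.
  case: (ltnP 1 (count (fun w : T => w.2 == x.2) t)) => h.
    by exists x.2; rewrite inE eqxx.
  exists y.2; rewrite !inE eqxx orbT; split => //.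
  have st : size t = n.-2 by rewrite -Hn. lia.
have [a1 [z [b [Et [/eqP zQ hb]]]]] := split2 _ _ cQ.
set Q' := (x.2 + y.2).+1.
have nQ'L : Q' != x.2 by rewrite /Q'; apply/eqP; lia.
have nQ'M : Q' != y.2 by rewrite /Q'; apply/eqP; lia.
have nQQ' : Q != Q'.
  by move: QLM; rewrite !inE => /orP[]/eqP->; rewrite eq_sym.
have HallQ' : all (fun w : T => w.2 != Q') t.
  apply/allP => w /(allP Hall); rewrite !inE => /orP[]/eqP->; by rewrite eq_sym.
have Hpre : all (fun w : T => w.2 != Q') ((y.1, x.2) :: y :: a1).
  rewrite /= eq_sym nQ'L eq_sym nQ'M /=.
  by apply/allP => w wa; apply: (allP HallQ'); rewrite Et mem_cat wa.
have Hb' : all (fun w : T => w.2 != Q') b.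
  by apply/allP => w wa; apply: (allP HallQ'); rewrite Et mem_cat inE wa !orbT.
have HbLM : all (fun w : T => w.2 \in [:: x.2; y.2]) b.
  by apply/allP => w wa; apply: (allP Hall); rewrite Et mem_cat inE wa !orbT.
have Ha1LM : all (fun w : T => w.2 \in [:: x.2; y.2]) a1.
  by apply/allP => w wa; apply: (allP Hall); rewrite Et mem_cat wa.
set rb := relab Q Q' b.
have zE : (z.1, Q) = z by rewrite -zQ; case: (z).
have F1 (g : weight_family F C) (Hg : admissible g) :
    A g ((y.1, x.2) :: y :: a1 ++ z :: (z.1, Q') :: rb) = A g (x :: y :: t).
  have E := G4 g Hg ((y.1, x.2) :: y :: a1) z (z.1, Q') rb erefl.
  rewrite -cat_cons E; last by rewrite zQ.
  clear E; change (z.1, Q').2 with Q'; rewrite zQ.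
  have -> : relab Q' Q ((y.1, x.2) :: y :: a1 ++ [:: z, (z.1, Q') & rb]) =
            ((y.1, x.2) :: y :: a1) ++ z :: z :: b.
    transitivity (relab Q' Q ((y.1, x.2) :: y :: a1) ++ relab Q' Q [:: z, (z.1, Q') & rb]).
      exact: (map_cat _ ((y.1, x.2) :: y :: a1) _).
    rewrite relab_id //; congr (_ ++ _).
    have := relab_inv Q Q' b Hb'; rewrite /rb /relab /= zQ eqxx (negbTE nQQ') zE => ->.
    done.
  set P := (fun w : T => w.2 \in [:: Q; Q']).
  have T1 : A g (filter P ((y.1, x.2) :: y :: a1 ++ [:: z, (z.1, Q') & rb])) = 1%R.
    have -> : filter P ((y.1, x.2) :: y :: a1 ++ [:: z, (z.1, Q') & rb]) =
       (filter P ((y.1, x.2) :: y :: a1) ++ [:: z]) ++ ((z.1, Q') :: filter P rb).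
      rewrite (filter_cat _ ((y.1, x.2) :: y :: a1)) -catA; congr (_ ++ _).
      by rewrite /= /P zQ !inE !eqxx /= orbT.
    apply: (Gtriv g Hg _ _ Q Q') => //.
    - by case: (filter _ _).
    - apply/allP => w; rewrite mem_cat mem_filter /P !inE ?orbF.
      case/orP => [/andP[/orP[] /eqP E win]|/eqP ->]; rewrite ?E ?zQ ?eqxx //.
      by have := allP Hpre _ win; rewrite E eqxx.
    - apply/allP => w; rewrite inE mem_filter /P !inE ?orbF.
      case/orP => [/eqP -> //|]; rewrite ?eqxx //.
      case/andP => /orP[] /eqP E win; last by rewrite E eqxx.
      move: win; rewrite /rb /relab => /mapP[w0 _ Ew].
      by move: E; rewrite Ew /=; case: ifP => [_|/negbT ne] E; [move: nQQ'|move: ne]; rewrite E eqxx.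
  rewrite T1 mulr1.
  rewrite (Gdup g Hg ((y.1, x.2) :: y :: a1)) /= (G5 g Hg x) -Et.
  done.
have F2 (g : weight_family F C) (Hg : admissible g) :
    A g ((y.1, x.2) :: y :: a1 ++ z :: (z.1, Q') :: rb) =
    (A g (relab y.2 x.2 (z :: (z.1, Q') :: rb)) *
     A g (filter (fun w : T => w.2 \in [:: x.2; y.2])
            ((y.1, x.2) :: y :: a1 ++ z :: (z.1, Q') :: rb)))%R.
  have E := G4 g Hg [::] (y.1, x.2) y (a1 ++ z :: (z.1, Q') :: rb) erefl nLM.
  rewrite cat0s in E; change ((y.1, x.2).2) with x.2 in E.
  rewrite E; congr (_ * _)%R.
  have -> : relab y.2 x.2 ((y.1, x.2) :: y :: a1 ++ z :: (z.1, Q') :: rb) =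
     ((y.1, x.2) :: (y.1, x.2) :: relab y.2 x.2 a1) ++ relab y.2 x.2 (z :: (z.1, Q') :: rb).
    by rewrite /relab /= map_cat if_same eqxx.
  have -> : relab y.2 x.2 (z :: (z.1, Q') :: rb) =
     (z.1, x.2) :: relab y.2 x.2 ((z.1, Q') :: rb).
    rewrite {1}/relab /=; congr ((_, _) :: _).
    by move: QLM; rewrite zQ !inE => /orP[]/eqP->; rewrite ?if_same ?eqxx.
  rewrite (Gpre g Hg) //= eqxx /=.
  apply/allP => w /mapP[w0 w0a ->] /=.
  have := allP Ha1LM _ w0a; rewrite !inE => /orP[]/eqP->; rewrite ?eqxx //.
  by rewrite eq_sym (negbTE nLM).
have sb : n = size a1 + size b + 3 by rewrite -Hn /= Et size_cat /=; lia.
rewrite -(F1 alpha Ha) -(F1 beta Hb) (F2 alpha Ha) (F2 beta Hb).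
congr (_ * _)%R; apply: IHn; apply/andP; split.
- by rewrite size_map.
- rewrite size_map /= /rb size_map sb; set k1 := size a1; set k2 := size b; lia.
- by rewrite size_filter /= !inE eqxx.
set P' := (fun w : T => w.2 \in [:: x.2; y.2]).
have hq : 0 < count (predC P') rb.
  rewrite -has_count; case/hasP: hb => w0 w0b /eqP w0Q.
  apply/hasP; exists (w0.1, Q').
    by apply/mapP; exists w0 => //; rewrite w0Q eqxx.
  by rewrite /= /P' !inE (negbTE nQ'L) (negbTE nQ'M).
have hP : P' (z.1, Q') = false by rewrite /P' !inE (negbTE nQ'L) (negbTE nQ'M).
have := count_predC P' rb; have := count_size P' a1.
have srb : size rb = size b by rewrite /rb size_map.
rewrite size_filter /= count_cat /= hP srb sb.
set k1 := size a1; set k2 := size b; set c1 := count P' a1; set c2 := count P' rb.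
set c3 := count (predC P') rb.
case: (P' (y.1, x.2)); case: (P' y); case: (P' z) => /=; lia.
Qed.

Lemma main_all n : forall s, size s = n -> 0 < n -> A alpha s = A beta s.
Proof.
elim/ltn_ind: n => n IHn' s0 Hn0 n0.
have IHn : forall s, 0 < size s < n -> A alpha s = A beta s.
  by move=> s /andP[h1 h2]; exact: (IHn' (size s) h2 s erefl h1).
suff H : forall d s, size (undup (map snd s)) = d -> size s = n -> A alpha s = A beta s.
  exact: (H _ s0 erefl Hn0).
elim/ltn_ind => d IHd s Hd Hn.
case: s Hd Hn => [|x [|y t]] Hd Hn.
- by rewrite -Hn in n0.
- rewrite (G1 alpha Ha) ?(G1 beta Hb) //.
    by move=> [|i] [|j].
  by move=> [|i] [|j].
have E (g : weight_family F C) (Hg : admissible g) :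
    A g (x :: y :: t) = A g ([::] ++ (y.1, x.2) :: y :: t).
  by rewrite cat0s (G5 g Hg x).
have xin : x.2 \in undup (map snd (x :: y :: t)) by rewrite mem_undup inE eqxx.
have yin : y.2 \in undup (map snd (x :: y :: t)) by rewrite mem_undup !inE eqxx orbT.
case Hu: (undup (map snd (x :: y :: t))) Hd xin yin => [|l1 [|l2 [|l3 r]]] Hd xin yin //.
-
  have Hl : forall i j, i < size (x :: y :: t) -> j < size (x :: y :: t) ->
      lab (x :: y :: t) i = lab (x :: y :: t) j.
    move=> i j hi hj.
    have hm k : k < size (x :: y :: t) -> lab (x :: y :: t) k = l1.
      move=> hk; apply/eqP; rewrite -(mem_seq1 _ l1) -Hu mem_undup.
      by apply/mapP; exists (nth d0 (x :: y :: t) k) => //; apply: mem_nth.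
    by rewrite !hm.
  by rewrite (G1 alpha Ha) ?(G1 beta Hb).
-
  case: (eqVneq x.2 y.2) => exy.
    rewrite (Gcoll alpha Ha) ?(Gcoll beta Hb) //; apply: IHn.
    by rewrite -Hn /=.
  case: (leqP n 4) => n4.
    by move: n4; rewrite -Hn => n4; apply: Hsmall => //; rewrite Hu.
  apply: (Fstep n IHn) => //.
  apply/allP => w wt; apply: (lab3 x.2 y.2 l1 l2) => //.
  by rewrite -Hu mem_undup; apply/mapP; exists w => //; rewrite !inE wt !orbT.
-
  rewrite (E alpha Ha) (E beta Hb).
  apply: (Cstep n IHn d IHd) => //.
  - by rewrite cat0s /= -Hd -Hu.
  - by rewrite -Hd.
Qed.

End Main.

Lemma card_part2 (s : seq T) : size (undup (map snd s)) = 2 -> #|part s| = 2.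
Proof.
case Hu: (undup (map snd s)) => [|l1 [|l2 [|l3 r]]] // _.
have U := undup_uniq (map snd s); rewrite Hu /= inE andbT in U.
have ex l : l \in [:: l1; l2] -> exists k : 'I_(size s), lab s k = l.
  rewrite -Hu mem_undup => /mapP[w ws ->].
  have hi : index w s < size s by rewrite index_mem.
  by exists (Ordinal hi); rewrite /lab /= nth_index.
have inl (k : 'I_(size s)) : lab s k \in [:: l1; l2].
  by rewrite -Hu mem_undup; apply/mapP; exists (nth d0 s k) => //; apply: mem_nth.
have -> : part s = [set [set k : 'I_(size s) | lab s k == l1];
                    [set k : 'I_(size s) | lab s k == l2]].
  apply/setP => B; rewrite in_set2; apply/imsetP/orP.
    case=> x _ ->; have := inl x; rewrite !inE => /orP[]/eqP E; [left|right];
      by apply/eqP/setP => y; rewrite !inE /labrel E eq_sym.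
  case=> /eqP ->.
    have [k Ek] := ex l1 (mem_head _ _).
    by exists k => //; apply/setP => y; rewrite !inE /labrel Ek eq_sym.
  have [k Ek] : exists k : 'I_(size s), lab s k = l2 by apply: ex; rewrite !inE eqxx orbT.
  by exists k => //; apply/setP => y; rewrite !inE /labrel Ek eq_sym.
have [k Ek] := ex l1 (mem_head _ _).
suff N : [set k : 'I_(size s) | lab s k == l1] != [set k : 'I_(size s) | lab s k == l2].
  by rewrite cards2 N.
apply/eqP => /setP /(_ k); rewrite !inE Ek eqxx.
by move/esym/eqP => E; rewrite E eqxx in U.
Qed.

End L.

Theorem corollary6p4 (F : finType) (C : numClosedFieldType)
    (alpha beta : weight_family F C) :
  admissible alpha -> admissible beta ->
  (fam_eq alpha beta <->
   (forall n (f : {ffun 'I_n -> F}) (sigma : {set {set 'I_n}}),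
      0 < n -> n <= 4 -> partition sigma [set: 'I_n] -> #|sigma| = 2 ->
      alpha n f sigma = beta n f sigma)).
Proof.
move=> Ha Hb; split.
  by move=> Heq n f sigma n0 _ Hp _; apply: Heq.
move=> H n f pi n0 Hp.
set x0 := f (Ordinal n0).
set s := [seq (f i, index (pblock pi i) (enum pi)) | i <- enum 'I_n].
have [/eqP cov ti _] := and3P Hp.
have ne (k0 k : 'I_n) : nth k0 (enum 'I_n) k = k by apply: val_inj; rewrite /= nth_enum_ord.
have nthS (k : 'I_n) : nth (d0 F x0) s k = (f k, index (pblock pi k) (enum pi)).
  rewrite /s (nth_map k); last by rewrite size_enum_ord.
  by rewrite ne.
have Es (g : weight_family F C) : g n f pi = A F x0 C g s.
  rewrite -{1}(preim_partition_pblock Hp) /preim_partition.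
  apply: alpha_rep; first by rewrite size_map size_enum_ord.
    by move=> j; rewrite /fac nthS.
  move=> j j'; rewrite /lab !nthS /=.
  apply/eqP/eqP => [->//|E].
  by apply: (index_inj (pblock pi j) _ _ E); rewrite mem_enum pblock_mem // cov inE.
rewrite !Es; apply: (main_all F x0 C alpha beta Ha Hb _ n) => //.
  move=> s' /andP[h0 h4] hu.
  exact: (H (size s') (word F x0 s') (part F x0 s') h0 h4 (part_partition F x0 s')
           (card_part2 F x0 s' hu)).
by rewrite size_map size_enum_ord.
Qed.
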